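(* Let $H$ be a complex Hilbert space, $\varphi,\psi:[0,1]\to\mathbb{R}$ continuous, $A\in\mathbb{B}(H)$, $t\in[0,1]$, and put $m(t)=\min\{|\varphi(t)+\psi(t)|,|\varphi(t)-\psi(t)|\}$. Then (1) $\omega_t(\varphi,\psi;A)\ge m(t)\Big(\frac{\|A\|}{2}+\frac{\big|\|\operatorname{Re}A\|-\|\operatorname{Im}A\|\big|}{2}\Big)$; (2) $\omega_t^2(\varphi,\psi;A)\ge m(t)^2\Big(\frac14\|A^*A+AA^*\|+\frac{\big|\|\operatorname{Re}A\|^2-\|\operatorname{Im}A\|^2\big|}{2}\Big)$; (3) $\omega_t^2(\varphi,\psi;A)\ge m(t)^2\Big(\frac14\|A^*A+AA^*\|+\frac{c^2(\operatorname{Re}A)+c^2(\operatorname{Im}A)}{2}+\Big|\frac{\|\operatorname{Re}A\|^2-\|\operatorname{Im}A\|^2}{2}+\frac{c^2(\operatorname{Im}A)-c^2(\operatorname{Re}A)}{2}\Big|\Big)$; (4) $\omega_t^4(\varphi,\psi;A)\ge m(t)^4\Big(\frac1{16}\big\|(A^*A+AA^* )^2+4(\operatorname{Re}(A^2))^2\big\|+\frac12\big|\|\operatorname{Re}A\|^4-\|\operatorname{Im}A\|^4\big|\Big)$.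
   Context: $\operatorname{Re}A=(A+A^* )/2$, $\operatorname{Im}A=(A-A^* )/(2i)$, $S_1(H)$ is the unit sphere of $H$, $c(T)=\inf_{x\in S_1(H)}|\langle Tx,x\rangle|$ is the Crawford number, and $\omega_t(\varphi,\psi;A)=\sup_{x\in S_1(H)}|\langle(\varphi(t)A+\psi(t)A^* )x,x\rangle|$. *)

(* Defs.v *)
From HB Require Import structures.
From mathcomp Require Import all_boot all_order all_algebra.
From mathcomp Require Import all_classical all_reals all_analysis.
From mathcomp Require Import complex.
Set Implicit Arguments. Unset Strict Implicit. Unset Printing Implicit Defensive.
Import Order.TTheory GRing.Theory Num.Theory.
Local Open Scope classical_set_scope.
Local Open Scope ring_scope.

Section HilbertDefs.
Variable R : realType.
Local Notation C := R[i].

Definition cabs (z : C) : R :=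
  Num.sqrt (complex.Re z ^+ 2 + complex.Im z ^+ 2).

Variable V : lmodType C.
Variable ip : V -> V -> C.   (* inner product, linear in the first argument *)

Definition vnorm (x : V) : R := Num.sqrt (complex.Re (ip x x)).

Record is_hilbert : Prop := IsHilbert {
  ip_linear : forall (a : C) (x y z : V), ip (a *: x + y) z = a * ip x z + ip y z;
  ip_conjsym : forall x y : V, ip y x = conjc (ip x y);
  ip_pos : forall x : V, complex.Im (ip x x) = 0 /\ 0 <= complex.Re (ip x x);
  ip_definite : forall x : V, ip x x = 0 -> x = 0;
  ip_complete : forall u : nat -> V,
    (forall e : R, 0 < e -> exists N, forall m n, (N <= m)%N -> (N <= n)%N ->
        vnorm (u m - u n) < e) ->
    exists l : V, forall e : R, 0 < e -> exists N, forall n, (N <= n)%N ->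
        vnorm (u n - l) < e }.

Definition bounded_op (T : V -> V) : Prop :=
  (forall (a : C) (x y : V), T (a *: x + y) = a *: T x + T y) /\
  (exists M : R, forall x, vnorm (T x) <= M * vnorm x).

Definition is_adjoint (T Tstar : V -> V) : Prop :=
  forall x y : V, ip (T x) y = ip x (Tstar y).

Definition sphere1 : set V := [set x | vnorm x = 1].

Definition opnorm (T : V -> V) : R := sup [set vnorm (T x) | x in sphere1].

Definition crawford (T : V -> V) : R := inf [set cabs (ip (T x) x) | x in sphere1].

Definition op_add (S T : V -> V) : V -> V := fun x => S x + T x.
Definition op_comp (S T : V -> V) : V -> V := fun x => S (T x).
Definition op_scale (a : C) (T : V -> V) : V -> V := fun x => a *: T x.

Definition op_Re (A Astar : V -> V) : V -> V :=
  op_scale (2%:R)^-1 (op_add A Astar).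
Definition op_Im (A Astar : V -> V) : V -> V :=
  op_scale (2%:R * 'i%C)^-1 (op_add A (op_scale (-1) Astar)).

Definition omega_t (phi psi : R -> R) (t : R) (A Astar : V -> V) : R :=
  sup [set cabs (ip (op_add (op_scale (phi t)%:C%C A) (op_scale (psi t)%:C%C Astar) x) x)
      | x in sphere1].

End HilbertDefs.

(* Main.v *)
Require Import Defs.
From HB Require Import structures.
From mathcomp Require Import all_boot all_order all_algebra.
From mathcomp Require Import all_classical all_reals all_analysis.
From mathcomp Require Import complex.
From mathcomp Require Import ring lra.
Import Order.TTheory GRing.Theory Num.Theory numFieldNormedType.Exports.
Local Open Scope classical_set_scope.
Local Open Scope ring_scope.

Section S.
Variable R : realType.
Local Notation C := R[i].
Variable V : lmodType C.
Variable ip : V -> V -> C.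
Hypothesis HV : is_hilbert ip.

Lemma cjD (a b : C) : conjc (a + b) = conjc a + conjc b.
Proof. exact: rmorphD. Qed.
Lemma cjM (a b : C) : conjc (a * b) = conjc a * conjc b.
Proof. exact: rmorphM. Qed.
Lemma cjN (a : C) : conjc (- a) = - conjc a.
Proof. exact: rmorphN. Qed.
Lemma ipDl x y z : ip (x + y) z = ip x z + ip y z.
Proof. by have := ip_linear HV 1 x y z; rewrite scale1r mul1r. Qed.
Lemma ip0l z : ip 0 z = 0.
Proof. have h := ipDl 0 0 z; rewrite addr0 -{1}[ip 0 z]addr0 in h; by rewrite (addrI _ h). Qed.
Lemma ipZl a x z : ip (a *: x) z = a * ip x z.
Proof. by have := ip_linear HV a x 0 z; rewrite addr0 ip0l addr0. Qed.
Lemma ipDr x y z : ip z (x + y) = ip z x + ip z y.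
Proof. by rewrite (ip_conjsym HV) ipDl cjD -!(ip_conjsym HV). Qed.
Lemma ipZr a x z : ip z (a *: x) = conjc a * ip z x.
Proof. by rewrite (ip_conjsym HV) ipZl cjM -!(ip_conjsym HV). Qed.
Lemma ip0r z : ip z 0 = 0.
Proof. by rewrite (ip_conjsym HV) ip0l conjc0. Qed.
Lemma ipNl x z : ip (- x) z = - ip x z.
Proof. by rewrite -scaleN1r ipZl mulN1r. Qed.
Lemma ipNr x z : ip z (- x) = - ip z x.
Proof. by rewrite (ip_conjsym HV) ipNl cjN -(ip_conjsym HV). Qed.

Definition q x := complex.Re (ip x x).
Lemma ipxx x : ip x x = (q x)%:C%C.
Proof. rewrite /q; have := (ip_pos HV x).1; case: (ip x x) => a b /= ->; by []. Qed.
Lemma q_ge0 x : 0 <= q x. Proof. exact: (ip_pos HV x).2. Qed.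


Local Open Scope complex_scope.
Lemma ReD (a b : C) : complex.Re (a + b) = complex.Re a + complex.Re b.
Proof. by case: a b => [? ?] [? ?]. Qed.

Lemma nv_sq x : vnorm ip x ^+ 2 = q x.
Proof. by rewrite /vnorm sqr_sqrtr // q_ge0. Qed.
Lemma nv_ge0 x : 0 <= vnorm ip x.
Proof. exact: sqrtr_ge0. Qed.
Lemma q0 x : q x = 0 -> x = 0.
Proof. by move=> h; apply: (ip_definite HV); rewrite ipxx h. Qed.

Lemma q_scale (r : R) x : q (r%:C *: x) = r ^+ 2 * q x.
Proof.
rewrite /q ipZl ipZr ipxx -!complexr0; simpc => /=; ring.
Qed.

Lemma cs_unit x y : q x = 1 ->
  complex.Re (ip y x) ^+ 2 + complex.Im (ip y x) ^+ 2 <= q y.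
Proof.
move=> hx.
have h := q_ge0 (y + (- ip y x) *: x).
move: h; rewrite /q ipDl !ipDr !ipZl !ipZr.
rewrite [ip x y](ip_conjsym HV) !ipxx hx.
move: (ip y x) => [c1 c2]; simpc => /=.
move=> h; rewrite /q in h *; lra.
Qed.

Lemma ip0r' z : ip z 0 = 0. Proof. exact: ip0r. Qed.

Lemma normalize x : q x != 0 ->
  q ((Num.sqrt (q x))^-1%:C *: x) = 1.
Proof.
move=> nz; rewrite q_scale exprVn sqr_sqrtr ?q_ge0 // mulVf //.
Qed.

Lemma cs x y :
  complex.Re (ip y x) ^+ 2 + complex.Im (ip y x) ^+ 2 <= q y * q x.
Proof.
have [/q0 ->|nz] := eqVneq (q x) 0.
  by rewrite ip0r /= expr0n /= addr0 mulr_ge0 // q_ge0.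
have := cs_unit _ y (normalize x nz).
rewrite ipZr -complexr0.
have hs : 0 < Num.sqrt (q x) by rewrite sqrtr_gt0 lt0r nz q_ge0.
have hq : q x = Num.sqrt (q x) ^+ 2 by rewrite sqr_sqrtr // q_ge0.
move: (Num.sqrt (q x)) hs hq => s hs ->.
move: (ip y x) => [c1 c2]; simpc => /=.
move=> h.
have e : ((s^-1 * c1) ^+ 2 + (s^-1 * c2) ^+ 2) = (c1 ^+ 2 + c2 ^+ 2) / s ^+ 2.
  by field; rewrite gt_eqF.
rewrite e ler_pdivrMr ?exprn_gt0 // in h.
Qed.

Lemma sq_le (r y : R) : 0 <= y -> r ^+ 2 <= y ^+ 2 -> r <= y.
Proof.
move=> hy h; have [hr|hr] := lerP r 0; first by apply: le_trans hy.
by rewrite -ler_sqr // nnegrE ltW.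
Qed.

Lemma re_le u v : complex.Re (ip u v) <= vnorm ip u * vnorm ip v.
Proof.
have h := cs v u.
have hu := nv_sq u; have hv := nv_sq v.
have := nv_ge0 u; have := nv_ge0 v.
move: (vnorm ip u) (vnorm ip v) hu hv => a b hu hv ha hb.
rewrite -hu -hv in h.
move: (complex.Re (ip u v)) (complex.Im (ip u v)) h => r i h.
apply: sq_le; first exact: mulr_ge0.
rewrite exprMn; nra.
Qed.

Lemma q_add u v : q (u + v) = q u + q v + 2 * complex.Re (ip u v).
Proof.
rewrite /q ipDl !ipDr [ip v u](ip_conjsym HV) !ipxx.
move: (ip u v) => [c1 c2]; rewrite -!complexr0; simpc => /=; ring.
Qed.

Lemma nv_tri u v : vnorm ip (u + v) <= vnorm ip u + vnorm ip v.
Proof.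
have h := q_add u v; have h2 := re_le u v.
have := nv_sq (u + v); have := nv_sq u; have := nv_sq v.
have := nv_ge0 (u + v); have := nv_ge0 u; have := nv_ge0 v.
move: (vnorm ip (u + v)) (vnorm ip u) (vnorm ip v) h2 => a b c h2.
move=> hc hb ha ec eb ea.
rewrite -ea -eb -ec in h.
nra.
Qed.

Lemma nv_scale (r : R) x : vnorm ip (r%:C *: x) = `|r| * vnorm ip x.
Proof.
rewrite /vnorm -/(q _) q_scale sqrtrM ?sqr_ge0 // sqrtr_sqr //.
Qed.

Lemma ip_inj u v : (forall z, ip z u = ip z v) -> u = v.
Proof.
move=> h; apply/eqP; rewrite -subr_eq0; apply/eqP; apply: (ip_definite HV).
by rewrite -scaleN1r ipDr ipZr h -ipZr -ipDr scaleN1r subrr ip0r.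
Qed.

Definition lin (T : V -> V) := forall a x y, T (a *: x + y) = a *: T x + T y.

Lemma lin0 T : lin T -> T 0 = 0.
Proof.
move=> hT; have := hT 1 0 0; rewrite !scale1r addr0 => h.
by rewrite -{1}[T 0]addr0 in h; exact: (esym (addrI _ h)).
Qed.
Lemma linD T : lin T -> forall x y, T (x + y) = T x + T y.
Proof. move=> hT x y; have := hT 1 x y; rewrite !scale1r; exact. Qed.
Lemma linZ T : lin T -> forall a x, T (a *: x) = a *: T x.
Proof. by move=> hT a x; rewrite -[a *: x]addr0 hT lin0 // addr0. Qed.

Lemma adj_lin A As : is_adjoint ip A As -> lin As.
Proof.
move=> h a x y; apply: ip_inj => z.
by rewrite -h !ipDr !ipZr -!h.
Qed.

Lemma nv_unit x : vnorm ip x = 1 -> q x = 1.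
Proof. by move=> h; rewrite -nv_sq h expr1n. Qed.
Lemma unit_nv x : q x = 1 -> vnorm ip x = 1.
Proof. by move=> h; rewrite /vnorm -/(q x) h sqrtr1. Qed.
Lemma q00 : q 0 = 0.
Proof. by rewrite /q ip0l. Qed.
Lemma nv0 : vnorm ip 0 = 0.
Proof. by rewrite /vnorm -/(q 0) q00 sqrtr0. Qed.

Lemma Re_realM (r : R) (c : C) : complex.Re (r%:C * c) = r * complex.Re c.
Proof. by case: c => a b; rewrite -complexr0; simpc. Qed.

Lemma polar_hom T (K : R) : lin T -> (forall x y, ip (T x) y = ip x (T y)) -> 0 <= K ->
  (forall z, q z = 1 -> `|complex.Re (ip (T z) z)| <= K) ->
  forall z, `|complex.Re (ip (T z) z)| <= K * q z.
Proof.
move=> hT hs hK hb z.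
have [/q0 ->|nz] := eqVneq (q z) 0.
  by rewrite lin0 // ip0l /= normr0 q00 mulr0.
have := hb _ (normalize z nz).
have hs0 : 0 < Num.sqrt (q z) by rewrite sqrtr_gt0 lt0r nz q_ge0.
have hq : q z = Num.sqrt (q z) ^+ 2 by rewrite sqr_sqrtr // q_ge0.
rewrite linZ // ipZl ipZr conjc_real mulrA -rmorphM Re_realM.
rewrite {3}hq.
move: (Num.sqrt (q z)) hs0 => s hs0.
rewrite normrM gtr0_norm ?mulr_gt0 ?invr_gt0 // -ler_pdivlMl ?mulr_gt0 ?invr_gt0 //.
move=> h; apply: le_trans h _.
rewrite le_eqVlt; apply/orP; left; apply/eqP; field; rewrite gt_eqF //.
Qed.

Lemma ReC (r : R) : complex.Re (r%:C) = r. Proof. by []. Qed.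

Lemma polar T (K : R) : lin T -> (forall x y, ip (T x) y = ip x (T y)) -> 0 <= K ->
  (forall z, q z = 1 -> `|complex.Re (ip (T z) z)| <= K) ->
  forall x, q x = 1 -> vnorm ip (T x) <= K.
Proof.
move=> hT hs hK hb x hx.
have hh := @polar_hom T K hT hs hK hb.
have [nz|nz] := eqVneq (q (T x)) 0.
  by rewrite /vnorm -/(q _) nz sqrtr0.
have hy := normalize _ nz.
have hs0 : 0 < Num.sqrt (q (T x)) by rewrite sqrtr_gt0 lt0r nz q_ge0.
have hq : q (T x) = Num.sqrt (q (T x)) ^+ 2 by rewrite sqr_sqrtr // q_ge0.
rewrite /vnorm -/(q (T x)).
move: (Num.sqrt (q (T x))) hs0 hq hy => s hs0 hq hy.
have [y {}hy ey] : exists2 y, q y = 1 & y = (s^-1)%:C *: T x by exists ((s^-1)%:C *: T x).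
have h1 := hh (x + y).
have h2 := hh (x + (-1)%:C *: y).
have e1 := q_add x y.
have e2 := q_add x ((-1)%:C *: y).
rewrite q_scale hy ipZr conjc_real Re_realM in e2.
have ety : complex.Re (ip (T x) y) = s.
  rewrite ey ipZr conjc_real ipxx hq -rmorphM ReC; field; rewrite gt_eqF //.
have eyx : ip (T y) x = conjc (ip (T x) y) by rewrite hs -(ip_conjsym HV).
rewrite !(linD T hT) !(linZ T hT) in h1 h2.
rewrite !ipDl !ipDr !ipZl !ipZr eyx in h1 h2.
rewrite e1 e2 hx hy in h1 h2.
move: h1 h2 ety.
move: (ip (T x) x) (ip (T x) y) (ip (T y) y) (complex.Re (ip x y)) => [a1 a2] [b1 b2] [c1 c2] r.
rewrite -!complexr0; simpc => /=.
move=> h1 h2 ety.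
rewrite !ler_norml in h1 h2.
case/andP: h1 => _ h1; case/andP: h2 => h2 _.
rewrite expr2 in h2; lra.
Qed.

Lemma opnorm_prop T (K : R) : lin T -> 0 <= K ->
  (forall x, q x = 1 -> vnorm ip (T x) <= K) ->
  [/\ opnorm ip T <= K, 0 <= opnorm ip T &
      forall y, vnorm ip (T y) <= opnorm ip T * vnorm ip y].
Proof.
move=> hT hK hb.
set S := [set vnorm ip (T x) | x in sphere1 ip].
have ubS : ubound S K by move=> _ [x hx <-]; apply: hb; apply: nv_unit.
have hub : has_ubound S by exists K.
have [[e Se]|S0] := pselect (S !=set0); last first.
  have -> : opnorm ip T = 0.
    rewrite /opnorm -/S; suff -> : S = set0 by rewrite sup0.
    by apply/seteqP; split => // z Sz; apply: S0; exists z.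
  split => // y.
  have [/q0 ->|nz] := eqVneq (q y) 0; first by rewrite lin0 // nv0 mul0r.
  exfalso; apply: S0; exists (vnorm ip (T ((Num.sqrt (q y))^-1%:C *: y))).
  by exists ((Num.sqrt (q y))^-1%:C *: y) => //; apply: unit_nv; apply: normalize.
have sup_ub := ub_le_sup hub.
have supK : opnorm ip T <= K by apply: ge_sup => //; exists e.
have sup0' : 0 <= opnorm ip T.
  by apply: le_trans (sup_ub _ Se); case: Se => x _ <-; apply: nv_ge0.
split => // y.
have [/q0 ->|nz] := eqVneq (q y) 0; first by rewrite lin0 // nv0 mulr0.
have hu := normalize _ nz.
have : vnorm ip (T ((Num.sqrt (q y))^-1%:C *: y)) <= opnorm ip T.
  by apply: sup_ub; exists ((Num.sqrt (q y))^-1%:C *: y) => //; apply: unit_nv.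
have hs0 : 0 < Num.sqrt (q y) by rewrite sqrtr_gt0 lt0r nz q_ge0.
rewrite (linZ T hT) nv_scale /vnorm -/(q y).
rewrite gtr0_norm ?invr_gt0 // -ler_pdivlMl ?invr_gt0 // invrK mulrC //.
Qed.

Lemma c1E : (1 : C) = 1 +i* 0. Proof. by []. Qed.
Lemma c2E : ((2%:R : C)^-1) = (2^-1 : R) +i* 0.
Proof. by rewrite complexr0 fmorphV rmorph_nat. Qed.
Lemma cnE n : (n%:R : C) = (n%:R : R) +i* 0.
Proof. by rewrite complexr0 rmorph_nat. Qed.
Lemma c2iE : ((2%:R * 'i : C)^-1) = 0 +i* (- 2^-1 : R).
Proof.
have h : (2%:R * 'i : C) * (0 +i* (- 2^-1 : R)) = 1.
  rewrite cnE; simpc; apply/eqP; rewrite eq_complex /=; apply/andP; split; apply/eqP.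
    by field. by ring.
have nz : (2%:R * 'i : C) != 0 by apply/eqP => e; move: h; rewrite e mul0r => /eqP; rewrite eq_sym oner_eq0.
by apply: (mulfI nz); rewrite mulfV // h.
Qed.

Lemma q_scaleC (a : C) x : q (a *: x) = (complex.Re a ^+ 2 + complex.Im a ^+ 2) * q x.
Proof.
rewrite /q ipZl ipZr ipxx; case: a => a1 a2; rewrite -!complexr0; simpc => /=; ring.
Qed.

Definition selfadj (T : V -> V) := forall x y, ip (T x) y = ip x (T y).

Lemma cj2 : conjc ((2%:R : C)^-1) = (2%:R)^-1.
Proof. by rewrite c2E complexr0 conjc_real. Qed.
Lemma cj2i : conjc ((2%:R * 'i : C)^-1) = - (2%:R * 'i)^-1.
Proof. by rewrite c2iE; simpc. Qed.
Lemma cjn1 : conjc (-1 : C) = -1.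
Proof. by rewrite cjN conjc1. Qed.

Lemma adj_sym X Xs : is_adjoint ip X Xs -> forall x y, ip (Xs x) y = ip x (X y).
Proof. by move=> h x y; rewrite (ip_conjsym HV) -h -(ip_conjsym HV). Qed.

Lemma lin_add S T : lin S -> lin T -> lin (op_add S T).
Proof.
move=> hS hT a x y; rewrite /op_add hS hT.
by apply: ip_inj => w; rewrite !ipDr !ipZr !ipDr; ring.
Qed.
Lemma lin_comp S T : lin S -> lin T -> lin (op_comp S T).
Proof. by move=> hS hT a x y; rewrite /op_comp hT hS. Qed.
Lemma lin_scale c T : lin T -> lin (op_scale c T).
Proof.
move=> hT a x y; rewrite /op_scale hT.
by apply: ip_inj => w; rewrite !(ipDr, ipZr) ?cjM; ring.
Qed.
Lemma lin_Re X Xs : lin X -> lin Xs -> lin (op_Re X Xs).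
Proof. by move=> h1 h2; apply: lin_scale; apply: lin_add. Qed.
Lemma lin_Im X Xs : lin X -> lin Xs -> lin (op_Im X Xs).
Proof. by move=> h1 h2; apply: lin_scale; apply: lin_add => //; apply: lin_scale. Qed.

Lemma sa_add S T : selfadj S -> selfadj T -> selfadj (op_add S T).
Proof. by move=> hS hT x y; rewrite /op_add ipDl ipDr hS hT. Qed.
Lemma sa_scale (r : R) T : selfadj T -> selfadj (op_scale r%:C T).
Proof. by move=> hT x y; rewrite /op_scale ipZl ipZr conjc_real hT. Qed.
Lemma sa_sq T : selfadj T -> selfadj (op_comp T T).
Proof. by move=> hT x y; rewrite /op_comp hT hT. Qed.
Lemma sa_XsX X Xs : is_adjoint ip X Xs -> selfadj (op_comp Xs X).
Proof. by move=> h x y; rewrite /op_comp (adj_sym _ _ h) h. Qed.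
Lemma sa_XXs X Xs : is_adjoint ip X Xs -> selfadj (op_comp X Xs).
Proof. by move=> h x y; rewrite /op_comp h (adj_sym _ _ h). Qed.
Lemma adj_comp X Xs Y Ys : is_adjoint ip X Xs -> is_adjoint ip Y Ys ->
  is_adjoint ip (op_comp X Y) (op_comp Ys Xs).
Proof. by move=> hX hY x y; rewrite /op_comp hX hY. Qed.

Lemma sa_Re X Xs : is_adjoint ip X Xs -> selfadj (op_Re X Xs).
Proof.
move=> h x y; rewrite /op_Re /op_scale /op_add ipZl ipZr cj2 ipDl ipDr h (adj_sym _ _ h).
by ring.
Qed.
Lemma sa_Im X Xs : is_adjoint ip X Xs -> selfadj (op_Im X Xs).
Proof.
move=> h x y; rewrite /op_Im /op_scale /op_add ipZl ipZr cj2i ipDl ipDr h.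
by rewrite !ipZl !ipZr cjn1 (adj_sym _ _ h); ring.
Qed.

Lemma Re_val X Xs : is_adjoint ip X Xs -> forall z,
  ip (op_Re X Xs z) z = (complex.Re (ip (X z) z))%:C.
Proof.
move=> h z; rewrite /op_Re /op_scale /op_add ipZl ipDl (adj_sym _ _ h) [ip z _](ip_conjsym HV).
rewrite c2E; case: (ip (X z) z) => a b; rewrite -complexr0; simpc => /=.
apply/eqP; rewrite eq_complex /=; apply/andP; split; apply/eqP; by field.
Qed.
Lemma Im_val X Xs : is_adjoint ip X Xs -> forall z,
  ip (op_Im X Xs z) z = (complex.Im (ip (X z) z))%:C.
Proof.
move=> h z; rewrite /op_Im /op_scale /op_add ipZl ipDl ipZl (adj_sym _ _ h) [ip z _](ip_conjsym HV).
rewrite c2iE; case: (ip (X z) z) => a b; rewrite -complexr0; simpc => /=.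
apply/eqP; rewrite eq_complex /=; apply/andP; split; apply/eqP; by field.
Qed.


Lemma img_empty (F : V -> R) : ~ (exists x, sphere1 ip x) ->
  [set F x | x in sphere1 ip] = set0.
Proof.
move=> ne; apply/seteqP; split => // t [x hx _]; apply: ne; by exists x.
Qed.

Lemma sup_ge0_img (F : V -> R) : (forall x, 0 <= F x) ->
  has_ubound [set F x | x in sphere1 ip] -> 0 <= sup [set F x | x in sphere1 ip].
Proof.
move=> h0 hub; have [[x hx]|ne] := pselect (exists x, sphere1 ip x).
  by apply: le_trans (h0 x) _; apply: ub_le_sup => //; exists x.
by rewrite img_empty // sup0.
Qed.

Lemma inf_ge0_img (F : V -> R) : (forall x, 0 <= F x) ->
  0 <= inf [set F x | x in sphere1 ip].
Proof.
move=> h0; have [[x hx]|ne] := pselect (exists x, sphere1 ip x).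
  by apply: lb_le_inf; [exists (F x); exists x | move=> t [y _ <-]].
by rewrite img_empty // inf0.
Qed.

Lemma inf_le_img (F : V -> R) x : (forall x, 0 <= F x) -> sphere1 ip x ->
  inf [set F x | x in sphere1 ip] <= F x.
Proof.
move=> h0 hx; apply: ge_inf; last by exists x.
by exists 0 => t [y _ <-].
Qed.

Lemma cabsC (r : R) : cabs (r%:C) = `|r|.
Proof. by rewrite /cabs ReC (_ : complex.Im (r%:C) = 0) // expr0n addr0 sqrtr_sqr. Qed.
Lemma cabs_ge0 (z : C) : 0 <= cabs z. Proof. exact: sqrtr_ge0. Qed.

Lemma final_arith (m k b c cB cC oA oP oQ : R) :
  0 <= m -> 0 <= k -> 0 <= b -> 0 <= c -> 0 <= cB -> 0 <= cC ->
  b ^+ 2 + cC ^+ 2 <= k ^+ 2 -> c ^+ 2 + cB ^+ 2 <= k ^+ 2 ->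
  oA <= b + c -> oP <= 2 * (b ^+ 2 + c ^+ 2) -> oQ <= 8 * (b ^+ 4 + c ^+ 4) ->
  [/\ m * (oA / 2 + `|b - c| / 2) <= m * k,
      m ^+ 2 * (oP / 4 + `|b ^+ 2 - c ^+ 2| / 2) <= (m * k) ^+ 2,
      m ^+ 2 * (oP / 4 + (cB ^+ 2 + cC ^+ 2) / 2
         + `|(b ^+ 2 - c ^+ 2) / 2 + (cC ^+ 2 - cB ^+ 2) / 2|) <= (m * k) ^+ 2
    & m ^+ 4 * (oQ / 16 + `|b ^+ 4 - c ^+ 4| / 2) <= (m * k) ^+ 4].
Proof.
move=> hm hk hb hc hcB hcC h1 h2 hA hP hQ.
have bk : b ^+ 2 <= k ^+ 2 by nra.
have ck : c ^+ 2 <= k ^+ 2 by nra.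
have bk1 : b <= k by rewrite -ler_sqr // nnegrE.
have ck1 : c <= k by rewrite -ler_sqr // nnegrE.
have bk4 : b ^+ 4 <= k ^+ 4.
  by rewrite (_ : 4%N = (2 * 2)%N) // !exprM ler_sqr // nnegrE exprn_ge0.
have ck4 : c ^+ 4 <= k ^+ 4.
  by rewrite (_ : 4%N = (2 * 2)%N) // !exprM ler_sqr // nnegrE exprn_ge0.
rewrite !exprMn; split; apply: ler_wpM2l; rewrite ?exprn_ge0 //.
- by case: (lerP c b) => h; lra.
- by case: (lerP (c ^+ 2) (b ^+ 2)) => h; lra.
- set u := (b ^+ 2 - c ^+ 2) / 2 + (cC ^+ 2 - cB ^+ 2) / 2.
  by case: (lerP 0 u) => h; [rewrite ger0_norm // | rewrite ltr0_norm //]; rewrite /u in h *; lra.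
- by case: (lerP (c ^+ 4) (b ^+ 4)) => h; lra.
Qed.

Ltac cfin := apply/eqP; rewrite eq_complex /=; apply/andP; split; apply/eqP; by field.

Section Ops.
Variables A As : V -> V.
Hypothesis hAl : lin A.
Hypothesis hAd : is_adjoint ip A As.
Let hAsl := adj_lin _ _ hAd.
Let B := op_Re A As.
Let Cm := op_Im A As.

Lemma A_dec z : A z = B z + 'i *: Cm z.
Proof.
apply: ip_inj => w; rewrite /B /Cm /op_Re /op_Im /op_scale /op_add.
rewrite !(ipDr, ipZr) c2E c2iE.
move: (ip w (A z)) (ip w (As z)) => [a1 a2] [b1 b2].
simpc; cfin.
Qed.

Lemma nvA z : vnorm ip (A z) <= vnorm ip (B z) + vnorm ip (Cm z).
Proof.
rewrite A_dec; apply: le_trans (nv_tri _ _) _.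
rewrite /vnorm -!/(q _) [q ('i *: _)]q_scaleC.
by rewrite (_ : complex.Re 'i = 0) // (_ : complex.Im 'i = 1) // expr0n expr1n add0r mul1r.
Qed.

Lemma qAB z : q (A z) + q (As z) = 2 * (q (B z) + q (Cm z)).
Proof.
rewrite /B /Cm /op_Re /op_Im /op_scale /op_add !q_scaleC !q_add q_scaleC ipZr.
rewrite c2E c2iE.
move: (ip (A z) (As z)) => [a1 a2].
simpc => /=. by field.
Qed.

Let P := op_add (op_comp As A) (op_comp A As).
Let D := op_Re (op_comp A A) (op_comp As As).

Lemma linB : lin B. Proof. exact: lin_Re. Qed.
Lemma linC : lin Cm. Proof. exact: lin_Im. Qed.
Lemma linP : lin P. Proof. by apply: lin_add; apply: lin_comp. Qed.
Lemma linDD : lin D. Proof. by apply: lin_Re; apply: lin_comp. Qed.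
Lemma saB : selfadj B. Proof. exact: sa_Re. Qed.
Lemma saC : selfadj Cm. Proof. exact: sa_Im. Qed.
Lemma saP : selfadj P. Proof. apply: sa_add; [exact: sa_XsX hAd | exact: sa_XXs hAd]. Qed.
Lemma saD : selfadj D. Proof. by apply: sa_Re; apply: adj_comp. Qed.

Lemma P_val z : complex.Re (ip (P z) z) = q (A z) + q (As z).
Proof.
rewrite /P /op_add /op_comp ipDl ReD.
have -> : ip (As (A z)) z = ip (A z) (A z) by rewrite (adj_sym _ _ hAd).
by rewrite (hAd (As z) z).
Qed.

Lemma BB z : B (B z) = (4^-1 : R)%:C *: (P z + (2%:R : R)%:C *: D z).
Proof.
rewrite /B /P /D /op_Re /op_scale /op_add /op_comp.
rewrite !(linZ A hAl) !(linD A hAl) !(linZ As hAsl) !(linD As hAsl).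
apply: ip_inj => w; rewrite !(ipDr, ipZr) c2E.
move: (ip w (A (A z))) (ip w (A (As z))) (ip w (As (A z))) (ip w (As (As z))).
move=> [a1 a2] [b1 b2] [c1 c2] [d1 d2].
rewrite -!complexr0; simpc; cfin.
Qed.

Lemma CC z : Cm (Cm z) = (4^-1 : R)%:C *: (P z + (- 2%:R : R)%:C *: D z).
Proof.
rewrite /Cm /P /D /op_Re /op_Im /op_scale /op_add /op_comp.
rewrite !(linZ A hAl) !(linD A hAl) !(linZ As hAsl) !(linD As hAsl).
rewrite !(linZ A hAl) !(linZ As hAsl).
apply: ip_inj => w; rewrite !(ipDr, ipZr) c2E c2iE.
move: (ip w (A (A z))) (ip w (A (As z))) (ip w (As (A z))) (ip w (As (As z))).
move=> [a1 a2] [b1 b2] [c1 c2] [d1 d2].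
rewrite -!complexr0; simpc; cfin.
Qed.

Let Q := op_add (op_comp P P) (op_scale 4%:R (op_comp D D)).

Lemma linQ : lin Q.
Proof. apply: lin_add; first by apply: lin_comp; exact: linP.
by apply: lin_scale; apply: lin_comp; exact: linDD. Qed.
Lemma saQ : selfadj Q.
Proof.
apply: sa_add; first by apply: sa_sq; exact: saP.
move=> x y; rewrite /op_scale ipZl ipZr conjc_nat.
by congr (_ * _); apply: sa_sq; exact: saD.
Qed.

Lemma Q_val z : complex.Re (ip (Q z) z) = q (P z) + 4 * q (D z).
Proof.
rewrite /Q /op_add /op_scale /op_comp ipDl ipZl ReD saP saD.
by rewrite cnE complexr0 Re_realM.
Qed.

Lemma Q_BC z : q (P z) + 4 * q (D z) = 8 * (q (B (B z)) + q (Cm (Cm z))).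
Proof.
rewrite BB CC !q_scale !q_add !q_scale !ipZr !conjc_real !Re_realM.
by field.
Qed.

Lemma om_sq (f g : R) x :
  let z := ip (op_add (op_scale f%:C A) (op_scale g%:C As) x) x in
  complex.Re z ^+ 2 + complex.Im z ^+ 2 =
  (f + g) ^+ 2 * complex.Re (ip (A x) x) ^+ 2 + (f - g) ^+ 2 * complex.Im (ip (A x) x) ^+ 2.
Proof.
rewrite /op_add /op_scale ipDl !ipZl (adj_sym _ _ hAd) [ip x (A x)](ip_conjsym HV).
case: (ip (A x) x) => a b; rewrite -!complexr0; simpc => /=; ring.
Qed.

Lemma qT_bound T (b : R) : (forall y, vnorm ip (T y) <= b * vnorm ip y) -> 0 <= b ->
  forall y, q (T y) <= b ^+ 2 * q y.
Proof.
move=> h hb y; rewrite -!nv_sq -exprMn; rewrite ler_sqr ?nnegrE ?nv_ge0 ?mulr_ge0 ?nv_ge0 //.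
Qed.

Lemma main (phi psi : R -> R) (t M : R)
  (hM : forall x, vnorm ip (A x) <= M * vnorm ip x) :
  let m := Num.min `|phi t + psi t| `|phi t - psi t| in
  let w := omega_t ip phi psi t A As in
  let nRe := opnorm ip (op_Re A As) in
  let nIm := opnorm ip (op_Im A As) in
  let P := op_add (op_comp As A) (op_comp A As) in
  let ReA2 := op_Re (op_comp A A) (op_comp As As) in
  [/\ w >= m * (opnorm ip A / 2 + `|nRe - nIm| / 2),
      w ^+ 2 >= m ^+ 2 * (opnorm ip P / 4 + `|nRe ^+ 2 - nIm ^+ 2| / 2),
      w ^+ 2 >= m ^+ 2 * (opnorm ip P / 4
                 + (crawford ip (op_Re A As) ^+ 2 + crawford ip (op_Im A As) ^+ 2) / 2
                 + `|(nRe ^+ 2 - nIm ^+ 2) / 2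
                     + (crawford ip (op_Im A As) ^+ 2 - crawford ip (op_Re A As) ^+ 2) / 2|)
    & w ^+ 4 >= m ^+ 4 * (opnorm ip (op_add (op_comp P P) (op_scale 4%:R (op_comp ReA2 ReA2))) / 16
                 + `|nRe ^+ 4 - nIm ^+ 4| / 2)].
Proof.
move=> m w nRe nIm P' ReA2.
have hm0 : 0 <= m by rewrite /m le_min !normr_ge0.
have hm1 : m ^+ 2 <= (phi t + psi t) ^+ 2.
  by rewrite -(real_normK (num_real (phi t + psi t))) ler_sqr ?nnegrE ?normr_ge0 // /m ge_min lexx.
have hm2 : m ^+ 2 <= (phi t - psi t) ^+ 2.
  by rewrite -(real_normK (num_real (phi t - psi t))) ler_sqr ?nnegrE ?normr_ge0 // /m ge_min lexx orbT.
pose W := op_add (op_scale (phi t)%:C A) (op_scale (psi t)%:C As).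
have ew : w = sup [set cabs (ip (W x) x) | x in sphere1 ip] by [].
have hcab x : cabs (ip (W x) x) = Num.sqrt ((phi t + psi t) ^+ 2 * complex.Re (ip (A x) x) ^+ 2
     + (phi t - psi t) ^+ 2 * complex.Im (ip (A x) x) ^+ 2).
  by rewrite /cabs om_sq.
have hAb x : sphere1 ip x -> complex.Re (ip (A x) x) ^+ 2 + complex.Im (ip (A x) x) ^+ 2 <= M ^+ 2.
  move=> hx; have hx1 : vnorm ip x = 1 := hx.
  have q1 := nv_unit _ hx1; have hcs := cs x (A x).
  have := hM x; rewrite hx1 mulr1 => hM1.
  have := nv_sq (A x); have := nv_ge0 (A x).
  rewrite q1 mulr1 in hcs.
  move: (vnorm ip (A x)) hM1 => a hM1 ha ea.
  rewrite -ea in hcs; nra.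
have hub : has_ubound [set cabs (ip (W x) x) | x in sphere1 ip].
  exists (Num.sqrt (((phi t + psi t) ^+ 2 + (phi t - psi t) ^+ 2) * M ^+ 2)).
  move=> _ [x hx <-]; rewrite hcab; apply: ler_wsqrtr.
  have := hAb x hx.
  move: (complex.Re (ip (A x) x)) (complex.Im (ip (A x) x)) => a b hab.
  have ha : a ^+ 2 <= M ^+ 2 by have := sqr_ge0 b; lra.
  have hb : b ^+ 2 <= M ^+ 2 by have := sqr_ge0 a; lra.
  rewrite mulrDl; apply: lerD; apply: ler_wpM2l => //; exact: sqr_ge0.
have hw x : sphere1 ip x -> cabs (ip (W x) x) <= w.
  by move=> hx; rewrite ew; apply: ub_le_sup => //; exists x.
have hw0 : 0 <= w by rewrite ew; apply: sup_ge0_img => // x; exact: cabs_ge0.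
have [m0|mne] := eqVneq m 0.
  by rewrite m0 !expr0n /= !mul0r; split => //; apply: exprn_ge0.
have mpos : 0 < m by rewrite lt0r mne hm0.
pose k := w / m.
have hwk : w = m * k by rewrite /k mulrC divfK.
have hk0 : 0 <= k by rewrite /k divr_ge0.
have hab x : sphere1 ip x -> complex.Re (ip (A x) x) ^+ 2 + complex.Im (ip (A x) x) ^+ 2 <= k ^+ 2.
  move=> hx; have := hw x hx; rewrite hcab hwk.
  move: (complex.Re (ip (A x) x)) (complex.Im (ip (A x) x)) => a b.
  have hS : 0 <= (phi t + psi t) ^+ 2 * a ^+ 2 + (phi t - psi t) ^+ 2 * b ^+ 2.
    by apply: addr_ge0; apply: mulr_ge0; exact: sqr_ge0.
  set S := (phi t + psi t) ^+ 2 * a ^+ 2 + (phi t - psi t) ^+ 2 * b ^+ 2 in hS *; move=> h.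
  have hs0 := sqrtr_ge0 S.
  have hsq := sqr_sqrtr hS.
  have h2 : S <= (m * k) ^+ 2.
    rewrite -hsq; move: (Num.sqrt S) h hs0 => r h hr; nra.
  rewrite -(ler_pM2l (exprn_gt0 2 mpos)) -exprMn; apply: le_trans h2.
  rewrite /S mulrDr; apply: lerD; apply: ler_wpM2r => //; exact: sqr_ge0.
have hcB0 : 0 <= crawford ip (op_Re A As) by apply: inf_ge0_img => x; exact: cabs_ge0.
have hcC0 : 0 <= crawford ip (op_Im A As) by apply: inf_ge0_img => x; exact: cabs_ge0.
have hcBle x : sphere1 ip x -> crawford ip (op_Re A As) <= `|complex.Re (ip (A x) x)|.
  move=> hx; rewrite /crawford -cabsC -(Re_val _ _ hAd).
  exact: (inf_le_img (fun x => cabs (ip (op_Re A As x) x)) x (fun y => cabs_ge0 _) hx).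
have hcCle x : sphere1 ip x -> crawford ip (op_Im A As) <= `|complex.Im (ip (A x) x)|.
  move=> hx; rewrite /crawford -cabsC -(Im_val _ _ hAd).
  exact: (inf_le_img (fun x => cabs (ip (op_Im A As x) x)) x (fun y => cabs_ge0 _) hx).
have sqn (a : R) : `|a| ^+ 2 = a ^+ 2 by rewrite real_normK ?num_real.
have hkC : crawford ip (op_Im A As) <= k.
  have [[x0 hx0]|ne] := pselect (exists x, sphere1 ip x); last first.
    by rewrite /crawford img_empty // inf0.
  apply: le_trans (hcCle x0 hx0) _; have := hab x0 hx0.
  move: (complex.Re (ip (A x0) x0)) (complex.Im (ip (A x0) x0)) => a b h.
  rewrite -ler_sqr ?nnegrE ?normr_ge0 // sqn; have := sqr_ge0 a; lra.
have hkB : crawford ip (op_Re A As) <= k.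
  have [[x0 hx0]|ne] := pselect (exists x, sphere1 ip x); last first.
    by rewrite /crawford img_empty // inf0.
  apply: le_trans (hcBle x0 hx0) _; have := hab x0 hx0.
  move: (complex.Re (ip (A x0) x0)) (complex.Im (ip (A x0) x0)) => a b h.
  rewrite -ler_sqr ?nnegrE ?normr_ge0 // sqn; have := sqr_ge0 b; lra.
set cB := crawford ip (op_Re A As) in hcB0 hcBle hkB *.
set cC := crawford ip (op_Im A As) in hcC0 hcCle hkC *.
have hKC : 0 <= k ^+ 2 - cC ^+ 2 by rewrite subr_ge0 ler_sqr ?nnegrE.
have hKB : 0 <= k ^+ 2 - cB ^+ 2 by rewrite subr_ge0 ler_sqr ?nnegrE.
have hBK : forall z, q z = 1 -> `|complex.Re (ip (op_Re A As z) z)| <= Num.sqrt (k ^+ 2 - cC ^+ 2).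
  move=> z hz; have hz1 := unit_nv _ hz.
  rewrite (Re_val _ _ hAd) ReC -sqrtr_sqr; apply: ler_wsqrtr.
  have := hab z hz1; have := hcCle z hz1.
  move: (complex.Re (ip (A z) z)) (complex.Im (ip (A z) z)) => a b h1 h2.
  have : cC ^+ 2 <= b ^+ 2 by rewrite -(sqn b) ler_sqr ?nnegrE ?normr_ge0.
  lra.
have hCK : forall z, q z = 1 -> `|complex.Re (ip (op_Im A As z) z)| <= Num.sqrt (k ^+ 2 - cB ^+ 2).
  move=> z hz; have hz1 := unit_nv _ hz.
  rewrite (Im_val _ _ hAd) ReC -sqrtr_sqr; apply: ler_wsqrtr.
  have := hab z hz1; have := hcBle z hz1.
  move: (complex.Re (ip (A z) z)) (complex.Im (ip (A z) z)) => a b h1 h2.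
  have : cB ^+ 2 <= a ^+ 2 by rewrite -(sqn a) ler_sqr ?nnegrE ?normr_ge0.
  lra.
have [hb1 hb0 hbm] := opnorm_prop _ _ linB (sqrtr_ge0 _) (polar _ _ linB saB (sqrtr_ge0 _) hBK).
have [hc1 hc0 hcm] := opnorm_prop _ _ linC (sqrtr_ge0 _) (polar _ _ linC saC (sqrtr_ge0 _) hCK).
have hb2 : nRe ^+ 2 + cC ^+ 2 <= k ^+ 2.
  have e := sqr_sqrtr hKC; move: (Num.sqrt (k ^+ 2 - cC ^+ 2)) e hb1 => r e hr.
  have : nRe ^+ 2 <= r ^+ 2 by rewrite ler_sqr ?nnegrE // (le_trans hb0 hr).
  lra.
have hc2 : nIm ^+ 2 + cB ^+ 2 <= k ^+ 2.
  have e := sqr_sqrtr hKB; move: (Num.sqrt (k ^+ 2 - cB ^+ 2)) e hc1 => r e hr.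
  have : nIm ^+ 2 <= r ^+ 2 by rewrite ler_sqr ?nnegrE // (le_trans hc0 hr).
  lra.
have hAn : forall x, q x = 1 -> vnorm ip (A x) <= nRe + nIm.
  move=> x hx; apply: le_trans (nvA x) _.
  by apply: lerD; [have := hbm x | have := hcm x]; rewrite (unit_nv x hx) mulr1.
have [hoA _ _] := opnorm_prop _ _ hAl (addr_ge0 hb0 hc0) hAn.
have hPK : forall z, q z = 1 -> `|complex.Re (ip (P' z) z)| <= 2 * (nRe ^+ 2 + nIm ^+ 2).
  move=> z hz; rewrite P_val ger0_norm ?addr_ge0 ?q_ge0 // qAB.
  have := qT_bound _ _ hbm hb0 z; have := qT_bound _ _ hcm hc0 z.
  rewrite hz !mulr1 -/nRe -/nIm; lra.
have hK2 : 0 <= 2 * (nRe ^+ 2 + nIm ^+ 2) by apply: mulr_ge0 => //; apply: addr_ge0; exact: sqr_ge0.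
have [hoP _ _] := opnorm_prop _ _ linP hK2 (polar _ _ linP saP hK2 hPK).
have hK4 : 0 <= 8 * (nRe ^+ 4 + nIm ^+ 4) by apply: mulr_ge0 => //; apply: addr_ge0; exact: exprn_ge0.
have hQK : forall z, q z = 1 -> `|complex.Re (ip (op_add (op_comp P' P') (op_scale 4%:R (op_comp ReA2 ReA2)) z) z)| <= 8 * (nRe ^+ 4 + nIm ^+ 4).
  move=> z hz; rewrite Q_val ger0_norm; last by apply: addr_ge0; [exact: q_ge0 | apply: mulr_ge0 => //; exact: q_ge0].
  rewrite Q_BC.
  have h1 := qT_bound _ _ hbm hb0 (op_Re A As z); have h2 := qT_bound _ _ hbm hb0 z.
  have h3 := qT_bound _ _ hcm hc0 (op_Im A As z); have h4 := qT_bound _ _ hcm hc0 z.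
  rewrite hz mulr1 in h2 h4.
  have e1 : q (op_Re A As (op_Re A As z)) <= nRe ^+ 4.
    apply: le_trans h1 _; rewrite (_ : 4%N = (2 + 2)%N) // exprD.
    by apply: ler_wpM2l; [exact: exprn_ge0 | assumption].
  have e2 : q (op_Im A As (op_Im A As z)) <= nIm ^+ 4.
    apply: le_trans h3 _; rewrite (_ : 4%N = (2 + 2)%N) // exprD.
    by apply: ler_wpM2l; [exact: exprn_ge0 | move: h4; rewrite mulr1].
  move: e1 e2; rewrite -/nRe -/nIm; lra.
have [hoQ _ _] := opnorm_prop _ _ linQ hK4 (polar _ _ linQ saQ hK4 hQK).
have := final_arith m k nRe nIm cB cC (opnorm ip A) (opnorm ip P')
  (opnorm ip (op_add (op_comp P' P') (op_scale 4%:R (op_comp ReA2 ReA2))))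
  hm0 hk0 hb0 hc0 hcB0 hcC0 hb2 hc2 hoA hoP hoQ.
by rewrite hwk.
Qed.

End Ops.
End S.

Theorem theorem3p2 (R : realType) (V : lmodType R[i]) (ip : V -> V -> R[i])
  (HV : is_hilbert ip)
  (phi psi : R -> R)
  (hphi : {within `[0, 1], continuous phi})
  (hpsi : {within `[0, 1], continuous psi})
  (A Astar : V -> V) (hA : bounded_op ip A) (hAstar : is_adjoint ip A Astar)
  (t : R) (ht : t \in `[(0:R), 1]) :
  let m := Num.min `|phi t + psi t| `|phi t - psi t| in
  let w := omega_t ip phi psi t A Astar in
  let nRe := opnorm ip (op_Re A Astar) in
  let nIm := opnorm ip (op_Im A Astar) in
  let P := op_add (op_comp Astar A) (op_comp A Astar) in
  let ReA2 := op_Re (op_comp A A) (op_comp Astar Astar) in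
  [/\ w >= m * (opnorm ip A / 2 + `|nRe - nIm| / 2),
      w ^+ 2 >= m ^+ 2 * (opnorm ip P / 4 + `|nRe ^+ 2 - nIm ^+ 2| / 2),
      w ^+ 2 >= m ^+ 2 * (opnorm ip P / 4
                 + (crawford ip (op_Re A Astar) ^+ 2 + crawford ip (op_Im A Astar) ^+ 2) / 2
                 + `|(nRe ^+ 2 - nIm ^+ 2) / 2
                     + (crawford ip (op_Im A Astar) ^+ 2 - crawford ip (op_Re A Astar) ^+ 2) / 2|)
    & w ^+ 4 >= m ^+ 4 * (opnorm ip (op_add (op_comp P P) (op_scale 4%:R (op_comp ReA2 ReA2))) / 16
                 + `|nRe ^+ 4 - nIm ^+ 4| / 2)].
Proof.
case: hA => hAl [M hM].
exact: (@main R V ip HV A Astar hAl hAstar phi psi t M hM).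
Qed.
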